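(* Let $E$ be a crossed module extension of $\Pi_0$ with $\Pi_1$, $(s^1,s^0)$ a section system for $E$, and $M$ an abelian $\Pi_0$-module. (a) For every pointed $2$-cocycle $z\in Z^2_{\mathrm{pt}}(E,M)$ we have $z^{\mathrm{std}}_M(m)=z_M(m[m]^{-1})$ for $m\in M_E$, and for $g,h\in G_E$ \[z^{\mathrm{std}}_G(h,g)=z_M\big([h[\bar h]^{-1}]^{-1}\,{}^h([g[\bar g]^{-1}]^{-1})\,[hg[\overline{hg}]^{-1}]\big)-z_G\big(\mu([\bar h,\bar g]),[\bar h\bar g]\big)+z_G([\bar h],[\bar g]).\] (b) For every pointed $2$-coboundary $b\in B^2_{\mathrm{pt}}(E,M)$ we have $b^{\mathrm{std}}_M=0$, and if $c\in C^1_{\mathrm{pt}}(E,M)$ with $b=dc$, then $b^{\mathrm{std}}_G(h,g)=(dc_0)(\bar h,\bar g)$ for $g,h\in G_E$, where $c_0\in C^1(\Pi_0,M)$ is $c_0(p)=c([p])$.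
   Context: Let $\Pi_0$ be a group, $\Pi_1$ an abelian $\Pi_0$-module (written multiplicatively), $M$ an abelian $\Pi_0$-module (additive). A crossed module is $(G_V,M_V,\mu)$ with left action ${}^gm$ of $G_V$ on $M_V$, $\mu({}^gm)=g\mu(m)g^{-1}$, ${}^{\mu(n)}m=nmn^{-1}$. A crossed module extension $E$ of $\Pi_0$ with $\Pi_1$ is a crossed module $(G_E,M_E,\mu)$ with a monomorphism $\iota:\Pi_1\to M_E$ and epimorphism $\pi:G_E\to\Pi_0$ such that $\Pi_1\to M_E\to G_E\to\Pi_0$ is exact and ${}^g\iota(k)=\iota(\pi(g)\cdot k)$. Write $\bar g=\pi(g)$; $M$ is a $G_E$-module via $\pi$. A section system $(s^1,s^0)$: maps $s^0:\Pi_0\to G_E$ with $s^0(1)=1$, $\pi s^0=\mathrm{id}$, and $s^1:\mu(M_E)\to M_E$ with $s^1(1)=1$, $\mu s^1=\mathrm{id}$. Notation: $[p]:=s^0(p)$; $[x]:=s^1(x)$ for $x\in\mu(M_E)=\ker\pi$ (e.g. $[h[\bar h]^{-1}]=s^1(hs^0(\bar h)^{-1})$); $[m]:=s^1(\mu(m))$ for $m\in M_E$; $[q,p]:=s^1([q][p][qp]^{-1})$. Cochains of $E$: $C^1(E,M)=\mathrm{Map}(G_E,M)$, $C^2(E,M)=\mathrm{Map}(M_E\times G_E\times G_E,M)$, $(dc)(m,h,g)=c(\mu(m)h)-c(hg)+\bar h\cdot c(g)$, $(dc)(p,n,k,m,h,g)=c(p,\mu(n)k,\mu(m)h)-c(pn,k,hg)+c(n\,{}^km,kh,g)-\bar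 k\cdot c(m,h,g)$ on $C^2$; pointed means $c(1)=0$ resp. $c(1,1,1)=0$; $Z^2_{\mathrm{pt}}=Z^2\cap C^2_{\mathrm{pt}}$, $B^2_{\mathrm{pt}}=B^2\cap C^2_{\mathrm{pt}}$. Module and group parts: $c_M(m)=c(m,1,1)$, $c_G(h,g)=c(1,h,g)$; for $m\in M_E$ we write $c_G(m,h)$ for $c_G(\mu(m),h)$. Standardisation: for $z\in Z^2_{\mathrm{pt}}(E,M)$, $\sigma_z\in C^1_{\mathrm{pt}}(E,M)$ is $\sigma_z(g)=z([g[\bar g]^{-1}],[\bar g],1)$ and $z^{\mathrm{std}}:=z-d\sigma_z$. Group cochain differential: $(dc_0)(h,g)=c_0(h)-c_0(hg)+h\cdot c_0(g)$. *)

(* Defs.v *)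
From HB Require Import structures.
From mathcomp Require Import all_boot all_algebra.
Set Implicit Arguments. Unset Strict Implicit. Unset Printing Implicit Defensive.
Import GRing.Theory.
Local Open Scope ring_scope.

Record group := Group {
  gcar :> Type;
  gmul : gcar -> gcar -> gcar;
  gone : gcar;
  ginv : gcar -> gcar;
  gmulA : forall x y z, gmul x (gmul y z) = gmul (gmul x y) z;
  gmul1g : forall x, gmul gone x = x;
  gmulg1 : forall x, gmul x gone = x;
  gmulVg : forall x, gmul (ginv x) x = gone;
  gmulgV : forall x, gmul x (ginv x) = gone }.
Arguments gmul {g}. Arguments gone {g}. Arguments ginv {g}.
Infix "**" := gmul (at level 40, left associativity).

Definition is_hom (G H : group) (f : G -> H) := forall x y, f (x ** y) = f x ** f y.

Definition is_aut_action (G X : group) (act : G -> X -> X) :=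
  [/\ forall x, act gone x = x,
      forall g h x, act (g ** h) x = act g (act h x) &
      forall g x y, act g (x ** y) = act g x ** act g y].

Definition abelian_module (Pi0 Pi1 : group) (act : Pi0 -> Pi1 -> Pi1) :=
  (forall k l : Pi1, k ** l = l ** k) /\ is_aut_action act.

Definition additive_module (Pi0 : group) (M : zmodType) (act : Pi0 -> M -> M) :=
  [/\ forall m, act gone m = m,
      forall p q m, act (p ** q) m = act p (act q m) &
      forall p m n, act p (m + n) = act p m + act p n].

Record cm_ext (Pi0 Pi1 : group) (act1 : Pi0 -> Pi1 -> Pi1) := CMExt {
  GE : group;
  ME : group;
  cm_act : GE -> ME -> ME;
  cm_mu : ME -> GE;
  cm_iota : Pi1 -> ME;
  cm_pi : GE -> Pi0;
  cact_aut : is_aut_action cm_act;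
  mu_hom : is_hom cm_mu;
  mu_equiv : forall g m, cm_mu (cm_act g m) = g ** cm_mu m ** ginv g;
  peiffer : forall n m, cm_act (cm_mu n) m = n ** m ** ginv n;
  iota_hom : is_hom cm_iota;
  iota_inj : injective cm_iota;
  pi_hom : is_hom cm_pi;
  pi_surj : forall p, exists g, cm_pi g = p;
  exact_ME : forall m, cm_mu m = gone <-> exists k, cm_iota k = m;
  exact_GE : forall g, cm_pi g = gone <-> exists m, cm_mu m = g;
  cact_iota : forall g k, cm_act g (cm_iota k) = cm_iota (act1 (cm_pi g) k) }.
Arguments GE {Pi0 Pi1 act1} c. Arguments ME {Pi0 Pi1 act1} c.
Arguments cm_act {Pi0 Pi1 act1} c. Arguments cm_mu {Pi0 Pi1 act1} c.
Arguments cm_iota {Pi0 Pi1 act1} c. Arguments cm_pi {Pi0 Pi1 act1} c.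

(* section systems; s1 is only specified on cm_mu(M_E) = ker cm_pi, values outside
   are irrelevant (it is represented as a total function GE -> ME) *)
Record section_system (Pi0 Pi1 : group) (act1 : Pi0 -> Pi1 -> Pi1)
    (E : cm_ext act1) := SecSys {
  s0 : Pi0 -> GE E;
  s1 : GE E -> ME E;
  s0_1 : s0 gone = gone;
  s0_sec : forall p, cm_pi E (s0 p) = p;
  s1_1 : s1 gone = gone;
  s1_sec : forall x, (exists m, cm_mu E m = x) -> cm_mu E (s1 x) = x }.
Arguments s0 {Pi0 Pi1 act1 E} s. Arguments s1 {Pi0 Pi1 act1 E} s.

Section Cochains.
Variables (Pi0 Pi1 : group) (act1 : Pi0 -> Pi1 -> Pi1) (E : cm_ext act1)
  (M : zmodType) (actM : Pi0 -> M -> M).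

Notation G := (GE E). Notation Me := (ME E).
Notation bar := (cm_pi E).

Definition C1 := G -> M.
Definition C2 := Me -> G -> G -> M.

Definition d1 (c : C1) : C2 :=
  fun m h g => c (cm_mu E m ** h) - c (h ** g) + actM (bar h) (c g).

Definition d2 (c : C2) : Me -> Me -> G -> Me -> G -> G -> M :=
  fun p n k m h g =>
    c p (cm_mu E n ** k) (cm_mu E m ** h) - c (p ** n) k (h ** g)
    + c (n ** cm_act E k m) (k ** h) g - actM (bar k) (c m h g).

Definition pointed1 (c : C1) := c gone = 0.
Definition pointed2 (c : C2) := c gone gone gone = 0.

Definition is_cocycle2 (z : C2) :=
  forall p n k m h g, d2 z p n k m h g = 0.
Definition Z2pt (z : C2) := is_cocycle2 z /\ pointed2 z.
Definition is_coboundary2 (b : C2) :=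
  exists c : C1, forall m h g, b m h g = d1 c m h g.
Definition B2pt (b : C2) := is_coboundary2 b /\ pointed2 b.

Definition partM (c : C2) (m : Me) := c m gone gone.
Definition partG (c : C2) (h g : G) := c gone h g.

Variable S : section_system E.

Definition sigma_std (z : C2) : C1 :=
  fun g => z (s1 S (g ** ginv (s0 S (bar g)))) (s0 S (bar g)) gone.
Definition std (z : C2) : C2 :=
  fun m h g => z m h g - d1 (sigma_std z) m h g.

Definition sbrack (q p : Pi0) : Me :=
  s1 S (s0 S q ** s0 S p ** ginv (s0 S (q ** p))).

Definition d0 (c0 : Pi0 -> M) (h g : Pi0) : M :=
  c0 h - c0 (h ** g) + actM h (c0 g).

End Cochains.

Arguments C1 {Pi0 Pi1 act1} E M.
Arguments C2 {Pi0 Pi1 act1} E M.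
Arguments d1 {Pi0 Pi1 act1} E {M} actM c.
Arguments d2 {Pi0 Pi1 act1} E {M} actM c.
Arguments pointed1 {Pi0 Pi1 act1 E M} c.
Arguments pointed2 {Pi0 Pi1 act1 E M} c.
Arguments is_cocycle2 {Pi0 Pi1 act1} E {M} actM z.
Arguments Z2pt {Pi0 Pi1 act1} E {M} actM z.
Arguments is_coboundary2 {Pi0 Pi1 act1} E {M} actM b.
Arguments B2pt {Pi0 Pi1 act1} E {M} actM b.
Arguments partM {Pi0 Pi1 act1 E M} c m.
Arguments partG {Pi0 Pi1 act1 E M} c h g.
Arguments sigma_std {Pi0 Pi1 act1} E {M} S z.
Arguments std {Pi0 Pi1 act1} E {M} actM S z.
Arguments sbrack {Pi0 Pi1 act1 E} S q p.
Arguments d0 {Pi0 M} actM c0 h g.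

(* Main.v *)
Require Import Defs.
From HB Require Import structures.
From mathcomp Require Import all_boot all_algebra.
Import GRing.Theory.
Local Open Scope ring_scope.
Set Implicit Arguments. Unset Strict Implicit.

Lemma mulKg (G : group) (x y : G) : ginv x ** (x ** y) = y.
Proof. by rewrite gmulA gmulVg gmul1g. Qed.
Lemma mulKVg (G : group) (x y : G) : x ** (ginv x ** y) = y.
Proof. by rewrite gmulA gmulgV gmul1g. Qed.
Lemma canc_l (G : group) (x y w : G) : x ** y = x ** w -> y = w.
Proof. by move=> H; rewrite -(mulKg x y) H mulKg. Qed.
Lemma canc_r (G : group) (x y w : G) : y ** x = w ** x -> y = w.
Proof. by move=> H; rewrite -(gmulg1 y) -(gmulgV x) gmulA H -gmulA gmulgV gmulg1. Qed.
Lemma ginv_uniq (G : group) (x y : G) : x ** y = gone -> ginv x = y.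
Proof. by move=> H; apply: (@canc_l _ x); rewrite gmulgV H. Qed.
Lemma ginv1 (G : group) : ginv (@gone G) = gone.
Proof. by apply: ginv_uniq; rewrite gmul1g. Qed.
Lemma ginvM (G : group) (x y : G) : ginv (x ** y) = ginv y ** ginv x.
Proof. by apply: ginv_uniq; rewrite -gmulA mulKVg gmulgV. Qed.
Lemma ginvK (G : group) (x : G) : ginv (ginv x) = x.
Proof. by apply: ginv_uniq; rewrite gmulVg. Qed.

Lemma hom1 (G H : group) (f : G -> H) : is_hom f -> f gone = gone.
Proof.
move=> Hf; apply: (@canc_l _ (f gone)); by rewrite -Hf !gmulg1.
Qed.
Lemma homV (G H : group) (f : G -> H) : is_hom f -> forall x, f (ginv x) = ginv (f x).
Proof. move=> Hf x; symmetry; apply: ginv_uniq; by rewrite -Hf gmulgV hom1. Qed.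

Lemma act1x (G X : group) (act : G -> X -> X) : is_aut_action act -> forall g, act g gone = gone.
Proof.
case=> _ _ H3 g; apply: (@canc_l _ (act g gone)); by rewrite -H3 !gmulg1.
Qed.
Lemma actV (G X : group) (act : G -> X -> X) : is_aut_action act ->
  forall g x, act g (ginv x) = ginv (act g x).
Proof.
move=> Ha g x; symmetry; apply: ginv_uniq; case: (Ha) => _ _ H3.
by rewrite -H3 gmulgV act1x.
Qed.

Lemma actM0 (Pi0 : group) (M : zmodType) (actM : Pi0 -> M -> M) :
  additive_module actM -> forall p, actM p 0 = 0.
Proof.
case=> _ _ H3 p; move: (H3 p 0 0); rewrite addr0 => /(congr1 (fun x => x - actM p 0)).
by rewrite subrr addrK.
Qed.

Lemma lin3 (M : zmodType) (a b c : M) : a - b + c = 0 -> b = a + c.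
Proof. by rewrite addrAC => /eqP; rewrite subr_eq0 => /eqP. Qed.
Lemma lin4 (M : zmodType) (A B C D : M) : A - B + C - D = 0 -> A = B - C + D.
Proof.
move=> H; apply/eqP; rewrite -subr_eq0 -H opprD opprB !addrA; apply/eqP.
by rewrite [A + C - B]addrAC.
Qed.
Lemma pi1 (Pi0 Pi1 : group) (act1 : Pi0 -> Pi1 -> Pi1) (E : cm_ext act1) :
  cm_pi E gone = gone.
Proof. exact: (hom1 (@pi_hom _ _ _ E)). Qed.
Lemma mu1 (Pi0 Pi1 : group) (act1 : Pi0 -> Pi1 -> Pi1) (E : cm_ext act1) :
  cm_mu E gone = gone.
Proof. exact: (hom1 (@mu_hom _ _ _ E)). Qed.
Lemma pimu (Pi0 Pi1 : group) (act1 : Pi0 -> Pi1 -> Pi1) (E : cm_ext act1) m :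
  cm_pi E (cm_mu E m) = gone.
Proof. by apply/exact_GE; exists m. Qed.
Lemma mu_s1 (Pi0 Pi1 : group) (act1 : Pi0 -> Pi1 -> Pi1) (E : cm_ext act1)
  (S : section_system E) g : cm_pi E g = gone -> cm_mu E (s1 S g) = g.
Proof. by move=> H; apply: s1_sec; apply/exact_GE. Qed.
Lemma mu_a (Pi0 Pi1 : group) (act1 : Pi0 -> Pi1 -> Pi1) (E : cm_ext act1)
  (S : section_system E) g :
  cm_mu E (s1 S (g ** ginv (s0 S (cm_pi E g)))) = g ** ginv (s0 S (cm_pi E g)).
Proof. by apply: mu_s1; rewrite pi_hom (homV (@pi_hom _ _ _ E)) s0_sec gmulgV. Qed.
Lemma mu_br (Pi0 Pi1 : group) (act1 : Pi0 -> Pi1 -> Pi1) (E : cm_ext act1)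
  (S : section_system E) p q :
  cm_mu E (sbrack S p q) = s0 S p ** s0 S q ** ginv (s0 S (p ** q)).
Proof. by apply: mu_s1; rewrite !pi_hom (homV (@pi_hom _ _ _ E)) !s0_sec gmulgV. Qed.

Ltac simplz H E HM1 Hp HmodM :=
  do 2 rewrite ?mu1 ?gmul1g ?gmulg1 ?(act1x (cact_aut E)) ?pi1 ?HM1 ?Hp ?(actM0 HmodM) in H.

Lemma coc_i (Pi0 Pi1 : group) (act1 : Pi0 -> Pi1 -> Pi1) (E : cm_ext act1)
  (M : zmodType) (actM : Pi0 -> M -> M) (HmodM : additive_module actM)
  (z : C2 E M) (Hz : is_cocycle2 E actM z) (Hp : pointed2 z) k :
  z gone k gone = 0.
Proof.
have HM1 : forall m, actM gone m = m by case: HmodM.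
have H := Hz gone gone k gone gone gone; rewrite /d2 in H.
simplz H E HM1 Hp HmodM.
by move: H; rewrite subrr add0r subr0.
Qed.

Lemma coc_ii (Pi0 Pi1 : group) (act1 : Pi0 -> Pi1 -> Pi1) (E : cm_ext act1)
  (M : zmodType) (actM : Pi0 -> M -> M) (HmodM : additive_module actM)
  (z : C2 E M) (Hz : is_cocycle2 E actM z) (Hp : pointed2 z) p x :
  z p gone x = z p gone gone.
Proof.
have HM1 : forall m, actM gone m = m by case: HmodM.
have H := Hz p gone gone gone gone x; rewrite /d2 in H.
simplz H E HM1 Hp HmodM.
move: H; rewrite addrK => /eqP; rewrite subr_eq0 => /eqP ->; done.
Qed.

Lemma coc_iii (Pi0 Pi1 : group) (act1 : Pi0 -> Pi1 -> Pi1) (E : cm_ext act1)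
  (M : zmodType) (actM : Pi0 -> M -> M) (HmodM : additive_module actM)
  (z : C2 E M) (Hz : is_cocycle2 E actM z) (Hp : pointed2 z) g :
  z gone gone g = 0.
Proof. by rewrite (coc_ii HmodM Hz Hp). Qed.

Lemma coc_iv (Pi0 Pi1 : group) (act1 : Pi0 -> Pi1 -> Pi1) (E : cm_ext act1)
  (M : zmodType) (actM : Pi0 -> M -> M) (HmodM : additive_module actM)
  (z : C2 E M) (Hz : is_cocycle2 E actM z) (Hp : pointed2 z) p k g :
  z p k g = z p k gone + z gone k g.
Proof.
have HM1 : forall m, actM gone m = m by case: HmodM.
have H := Hz p gone k gone gone g; rewrite /d2 (coc_iii HmodM Hz Hp) in H.
simplz H E HM1 Hp HmodM.
move: H; rewrite subr0 => /lin3 H; by rewrite H.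
Qed.

Lemma coc_vi (Pi0 Pi1 : group) (act1 : Pi0 -> Pi1 -> Pi1) (E : cm_ext act1)
  (M : zmodType) (actM : Pi0 -> M -> M) (HmodM : additive_module actM)
  (z : C2 E M) (Hz : is_cocycle2 E actM z) (Hp : pointed2 z) p n k :
  z (p ** n) k gone = z p (cm_mu E n ** k) gone + z n k gone.
Proof.
have HM1 : forall m, actM gone m = m by case: HmodM.
have H := Hz p n k gone gone gone; rewrite /d2 in H.
simplz H E HM1 Hp HmodM.
move: H; rewrite subr0 => /lin3 H; by rewrite H.
Qed.

Lemma coc_vii (Pi0 Pi1 : group) (act1 : Pi0 -> Pi1 -> Pi1) (E : cm_ext act1)
  (M : zmodType) (actM : Pi0 -> M -> M) (HmodM : additive_module actM)
  (z : C2 E M) (Hz : is_cocycle2 E actM z) (Hp : pointed2 z) n k :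
  z n k gone = z n gone gone - z gone (cm_mu E n) k.
Proof.
have HM1 : forall m, actM gone m = m by case: HmodM.
have H := Hz gone n gone gone k gone; rewrite /d2 in H.
simplz H E HM1 Hp HmodM.
rewrite (coc_i HmodM Hz Hp) (coc_ii HmodM Hz Hp n k) in H.
move: H; rewrite subr0 => /lin3 H; by rewrite H addrAC subrr add0r.
Qed.

Lemma coc_viii (Pi0 Pi1 : group) (act1 : Pi0 -> Pi1 -> Pi1) (Hmod1 : abelian_module act1)
  (E : cm_ext act1)
  (M : zmodType) (actM : Pi0 -> M -> M) (HmodM : additive_module actM)
  (z : C2 E M) (Hz : is_cocycle2 E actM z) (Hp : pointed2 z) p n :
  cm_mu E p = gone -> z p (cm_mu E n) gone = z p gone gone.
Proof.
move=> Hmu.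
have HM1 : forall m, actM gone m = m by case: HmodM.
have Hact : cm_act E (cm_mu E n) p = p.
  have [k Hk] := (proj1 (exact_ME p) Hmu).
  rewrite -Hk cact_iota pimu; case: Hmod1 => _ [-> _ _]; done.
have H := Hz gone gone (cm_mu E n) p gone gone; rewrite /d2 Hmu Hact pimu in H.
simplz H E HM1 Hp HmodM.
by move: H; rewrite subrr add0r => /eqP; rewrite subr_eq0 => /eqP.
Qed.

Lemma coc_v (Pi0 Pi1 : group) (act1 : Pi0 -> Pi1 -> Pi1) (E : cm_ext act1)
  (M : zmodType) (actM : Pi0 -> M -> M) (HmodM : additive_module actM)
  (z : C2 E M) (Hz : is_cocycle2 E actM z) (Hp : pointed2 z) a s a' s' :
  z gone (cm_mu E a ** s) (cm_mu E a' ** s') =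
  z a s s' - z (a ** cm_act E s a') (s ** s') gone + actM (cm_pi E s) (z a' s' gone).
Proof.
have HM1 : forall m, actM gone m = m by case: HmodM.
have H := Hz gone a s a' s' gone; rewrite /d2 in H.
simplz H E HM1 Hp HmodM.
exact: lin4.
Qed.

Lemma lin_final (M : zmodType) (A Z1 W C Y : M) :
  A + Z1 - W + C - (A - (W + Y) + C) = Y + Z1.
Proof.
rewrite opprD opprB addrA [_ + C + _]addrAC addrK.
rewrite [W + Y - A]addrC addrA [_ + - A]addrAC.
rewrite [A + Z1 - A]addrAC subrr add0r -addrA addKr addrC.
done.
Qed.

Lemma lin_b (M : zmodType) (ch chg acg csh cshg acsg : M) :
  ch - chg + acg - (ch - csh - (chg - cshg) + (acg - acsg)) = csh - cshg + acsg.
Proof.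
rewrite !opprD !opprK !addrA.
rewrite [ch - chg + acg - ch]addrAC [ch - chg - ch]addrAC subrr add0r.
rewrite [- chg + acg + csh + chg]addrAC [- chg + acg + chg]addrAC addNr add0r.
rewrite [acg + csh - cshg - acg]addrAC [acg + csh - acg]addrAC subrr add0r.
done.
Qed.

Lemma actMB (Pi0 : group) (M : zmodType) (actM : Pi0 -> M -> M) :
  additive_module actM -> forall p x y, actM p (x - y) = actM p x - actM p y.
Proof.
move=> HM p x y; case: (HM) => _ _ H3.
apply/eqP; rewrite -(subr_eq0 _ (actM p x - actM p y)) opprB addrA -H3 subrK subrr //.
Qed.

Unset Implicit Arguments.
Theorem proposition4p4
  (Pi0 Pi1 : group) (act1 : Pi0 -> Pi1 -> Pi1)
  (Hmod1 : abelian_module act1)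
  (E : cm_ext act1) (S : section_system E)
  (M : zmodType) (actM : Pi0 -> M -> M) (HmodM : additive_module actM) :
  (* (a) *)
  (forall z : C2 E M, Z2pt E actM z ->
     (forall m : ME E,
        partM (std E actM S z) m
        = partM z (m ** ginv (s1 S (cm_mu E m)))) /\
     (forall h g : GE E,
        partG (std E actM S z) h g
        = partM z (ginv (s1 S (h ** ginv (s0 S (cm_pi E h))))
                   ** cm_act E h (ginv (s1 S (g ** ginv (s0 S (cm_pi E g)))))
                   ** s1 S (h ** g ** ginv (s0 S (cm_pi E (h ** g)))))
          - partG z (cm_mu E (sbrack S (cm_pi E h) (cm_pi E g))) (s0 S (cm_pi E h ** cm_pi E g))
          + partG z (s0 S (cm_pi E h)) (s0 S (cm_pi E g)))) /\
  (* (b) *)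
  (forall b : C2 E M, B2pt E actM b ->
     (forall m : ME E, partM (std E actM S b) m = 0) /\
     (forall c : C1 E M, pointed1 c ->
        (forall m h g, b m h g = d1 E actM c m h g) ->
        forall h g : GE E,
          partG (std E actM S b) h g
          = d0 actM (fun p => c (s0 S p)) (cm_pi E h) (cm_pi E g))).
Proof.
have HM1 : forall m, actM gone m = m by case: HmodM.
split.
- move=> z [Hz Hp]; split.
  + move=> m; rewrite /partM /std /d1 /sigma_std.
    rewrite !gmulg1 !gmul1g pi1 pimu s0_1 ginv1 gmulg1 HM1 s1_1.
    rewrite subrK.
    set n := s1 S (cm_mu E m).
    have Hn : cm_mu E n = cm_mu E m by apply: mu_s1; exact: pimu.
    have Hm : m = (m ** ginv n) ** n by rewrite -gmulA gmulVg gmulg1.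
    rewrite {1}Hm (coc_vi HmodM Hz Hp) gmulg1 (coc_viii Hmod1 HmodM Hz Hp) ?addrK //.
    by rewrite (@mu_hom _ _ _ E) (homV (@mu_hom _ _ _ E)) Hn gmulgV.
  + move=> h g; rewrite /partG /partM /std /d1 /sigma_std mu1 gmul1g (@pi_hom _ _ _ E h g).
    set ph := cm_pi E h. set pg := cm_pi E g.
    set sh := s0 S ph. set sg := s0 S pg. set shg := s0 S (ph ** pg).
    set ah := s1 S (h ** ginv sh). set ag := s1 S (g ** ginv sg).
    set ahg := s1 S (h ** g ** ginv shg). set b := sbrack S ph pg.
    have Hah : cm_mu E ah = h ** ginv sh by exact: mu_a.
    have Hag : cm_mu E ag = g ** ginv sg by exact: mu_a.
    have Hb : cm_mu E b = sh ** sg ** ginv shg by exact: mu_br.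
    have Hahg : cm_mu E ahg = h ** g ** ginv shg.
      by apply: mu_s1; rewrite !(@pi_hom _ _ _ E) (homV (@pi_hom _ _ _ E)) s0_sec gmulgV.
    have hdec : h = cm_mu E ah ** sh by rewrite Hah -gmulA gmulVg gmulg1.
    have gdec : g = cm_mu E ag ** sg by rewrite Hag -gmulA gmulVg gmulg1.
    have Hsh : cm_mu E b ** shg = sh ** sg by rewrite Hb -gmulA gmulVg gmulg1.
    have E1 := coc_v HmodM Hz Hp ah sh ag sg.
    rewrite -hdec -gdec s0_sec in E1.
    rewrite E1 (coc_iv HmodM Hz Hp ah sh sg).
    set q := ah ** cm_act E sh ag.
    set X := ginv ah ** cm_act E h (ginv ag) ** ahg.
    have Hcomp : forall (x y : GE E) w, cm_act E (x ** y) w = cm_act E x (cm_act E y w).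
      by case: (cact_aut E).
    have Hacth : cm_act E h (ginv ag) = ah ** ginv (cm_act E sh ag) ** ginv ah.
      by rewrite {1}hdec Hcomp peiffer (actV (cact_aut E)).
    have HX : ahg = q ** X.
      rewrite /q /X Hacth -!gmulA mulKg mulKVg mulKVg; done.
    have HmuX : cm_mu E X = cm_mu E b.
      apply: (@canc_l _ (cm_mu E q)).
      rewrite -(@mu_hom _ _ _ E) -HX Hahg /q (@mu_hom _ _ _ E) mu_equiv Hah Hag Hb.
      by rewrite -!gmulA !mulKg.
    rewrite HX (coc_vi HmodM Hz Hp) HmuX -Hsh (coc_vii HmodM Hz Hp X) HmuX.
    exact: lin_final.
- move=> bb [[c0 Hc0] Hpb]; split.
  + move=> m; rewrite /partM /std /sigma_std Hc0 /d1.
    rewrite !gmulg1 !gmul1g ?pi1 ?pimu ?s0_1 ?ginv1 ?gmulg1 ?HM1 ?s1_1 ?mu1 ?gmul1g.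
    rewrite /pointed2 in Hpb; rewrite Hpb subr0 addr0 subrK Hc0 /d1 gmulg1 gmul1g pi1 HM1 subrK.
    by rewrite mu_s1 ?pimu // subrr.
  + move=> c Hc1 Hc h g; rewrite /partG /std /sigma_std Hc /d1 /d0.
    have Hsig : forall x, bb (s1 S (x ** ginv (s0 S (cm_pi E x)))) (s0 S (cm_pi E x)) gone
                          = c x - c (s0 S (cm_pi E x)).
      move=> x; rewrite Hc /d1 mu_a -gmulA gmulVg !gmulg1.
      by rewrite /pointed1 in Hc1; rewrite Hc1 (actM0 HmodM) addr0.
    rewrite mu1 gmul1g !Hsig (@pi_hom _ _ _ E h g) (actMB HmodM).
    exact: lin_b.
Qed.
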